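(* Assume $M$ is a message set whose communication topology $G_M$ is an oriented ring, and let $S=(P_1,\dots,P_N)$ be a $1$-synchronizable $M$-system. Then for every $\tau\in T_\omega(S)$ there is a normalized trace $\tau_N\in T_\omega(S)$ such that $\tau\equiv_S\tau_N$.
   Context: A message set $M=(\Sigma_M,N,\mathrm{src},\mathrm{dst})$: finite set of messages, $N\ge1$ peers, $\mathrm{src}(a)\neq\mathrm{dst}(a)\in\{1,\dots,N\}$. Its communication topology $G_M$ is the directed graph on $\{1,\dots,N\}$ with an edge $i\to j$ iff some message $a$ has $\mathrm{src}(a)=i$, $\mathrm{dst}(a)=j$; $G_M$ is an oriented ring if its edge set is exactly $\{(i,j)\mid j=i+1 \bmod N\}$. Actions $!a$ (by peer $\mathrm{src}(a)$), $?a$ (by peer $\mathrm{dst}(a)$); traces are finite action sequences; $!?a$ abbreviates $!a\cdot?a$. For a trace $\tau$, $\pi_!(\tau)$ is the sequence of sent messages; $\mathrm{buf}_{i\to j}(\tau)$ is the word $w$ (if any) with (sent on $i\to j$) $=$ (received on $i\to j$)$\cdot w$. $\tau$ is FIFO ($k$-bounded FIFO) if for all $i,j$ and prefixes $\tau'$, $\mathrm{buf}_{i\to j}(\tau')$ is defined (and has length $\le k$); synchronous if of the form $!?a_1\cdots!?a_k$. A trace is normalized if it is of the form $\tau_0\cdot !a_1\cdots !a_n$ with $\tau_0$ synchronous, $n\ge0$, $a_1,\dots,a_n\in\Sigma_M$. A system $S=(P_1,\dots,P_N)$: finite automata $P_i$ (all states accepting) over actions of peer $i$, with one FIFO channel per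 ordered pair $i\neq j$. A configuration: one control state per peer and contents $w_{i,j}$ of channels; stable if all channels empty. $!a$ ($\mathrm{src}(a)=i,\mathrm{dst}(a)=j$) moves $P_i$ and appends $a$ to $w_{i,j}$; $?a$ moves $P_j$ and removes $a$ from the head of $w_{i,j}$; $c_0$ is the initial configuration. $T_k(S)$ ($k\ge1$): $k$-bounded FIFO traces $\tau$ with $c_0\xrightarrow{\tau}c$ for some $c$; $T_0(S)$: synchronous such traces; $T_\omega(S)=\bigcup_kT_k(S)$. $\tau_1\equiv_S\tau_2$ iff $\tau_1,\tau_2\in T_\omega(S)$ and there is $c$ with $c_0\xrightarrow{\tau_1}c$ and $c_0\xrightarrow{\tau_2}c$. $ST_k(S)=\{\pi_!(\tau)\mid\tau\in T_k(S)\}\cup\{(\pi_!(\tau),c)\mid c_0\xrightarrow{\tau}c,\ c\text{ stable},\ \tau\in T_k(S)\}$; $S$ is $1$-synchronizable if $ST_0(S)=ST_1(S)$. *)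

(* Defs.v *)
(* Communicating automata over FIFO channels (message sets,
   systems, k-bounded traces, 1-synchronizability). Peers are 0-indexed: 'I_N. *)
From mathcomp Require Import all_boot.
Set Implicit Arguments. Unset Strict Implicit. Unset Printing Implicit Defensive.

Record msgset := MsgSet {
  msg : finType;
  npeers : nat;
  npeers_pos : 0 < npeers;
  src : msg -> 'I_npeers;
  dst : msg -> 'I_npeers;
  src_neq_dst : forall a, src a != dst a }.

Definition topo_edge (M : msgset) (i j : 'I_(npeers M)) : Prop :=
  exists a : msg M, src a = i /\ dst a = j.

Definition oriented_ring (M : msgset) : Prop :=
  forall i j : 'I_(npeers M),
    topo_edge i j <-> val j = (val i).+1 %% npeers M.

Inductive action (M : msgset) := Snd of msg M | Rcv of msg M.
Arguments Snd {M}. Arguments Rcv {M}.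

(* A system S = (P_1..P_N): peer i is a finite automaton (all states accepting)
   with state set [state i], initial state [init i] and transition relation
   [trans i]; only transitions labelled by actions of peer i are ever used. *)
Record system (M : msgset) := System {
  state : 'I_(npeers M) -> finType;
  init : forall i, state i;
  trans : forall i, state i -> action M -> state i -> bool }.

Section Semantics.
Variables (M : msgset) (S : system M).
Local Notation N := (npeers M).
Local Notation peer := 'I_N.

Record config := Config {
  cst : forall i : peer, state S i;
  chan : peer -> peer -> seq (msg M) }.

Definition c0 : config := Config (@init M S) (fun _ _ => [::]).

Definition stable (c : config) : Prop := forall i j, chan c i j = [::].

Definition step (c : config) (x : action M) (c' : config) : Prop :=
  match x with
  | Snd a =>
      let i := src a in let j := dst a in
      [/\ trans (cst c i) x (cst c' i),
          (forall k, k != i -> cst c' k = cst c k),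
          chan c' i j = rcons (chan c i j) a &
          (forall p q, (p, q) != (i, j) -> chan c' p q = chan c p q)]
  | Rcv a =>
      let i := src a in let j := dst a in
      [/\ trans (cst c j) x (cst c' j),
          (forall k, k != j -> cst c' k = cst c k),
          chan c i j = a :: chan c' i j &
          (forall p q, (p, q) != (i, j) -> chan c' p q = chan c p q)]
  end.

Fixpoint reach (c : config) (tau : seq (action M)) (c' : config) : Prop :=
  match tau with
  | [::] => c' = c
  | x :: t => exists c1, step c x c1 /\ reach c1 t c'
  end.

Definition sent_msg (x : action M) : option (msg M) :=
  if x is Snd a then Some a else None.
Definition recv_msg (x : action M) : option (msg M) :=
  if x is Rcv a then Some a else None.

Definition proj_send (tau : seq (action M)) : seq (msg M) := pmap sent_msg tau.

Definition on_chan (i j : peer) (a : msg M) : bool := (src a == i) && (dst a == j).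

Definition sent_on i j tau := filter (on_chan i j) (pmap sent_msg tau).
Definition recv_on i j tau := filter (on_chan i j) (pmap recv_msg tau).

Definition buf (i j : peer) tau (w : seq (msg M)) : Prop :=
  sent_on i j tau = recv_on i j tau ++ w.

Definition fifo (tau : seq (action M)) : Prop :=
  forall n i j, exists w, buf i j (take n tau) w.

Definition kfifo (k : nat) (tau : seq (action M)) : Prop :=
  forall n i j, exists w, buf i j (take n tau) w /\ size w <= k.

Definition synchronous (tau : seq (action M)) : Prop :=
  exists s : seq (msg M), tau = flatten [seq [:: Snd a; Rcv a] | a <- s].

Definition normalized (tau : seq (action M)) : Prop :=
  exists tau0 s, synchronous tau0 /\ tau = tau0 ++ [seq Snd a | a <- s].

Definition executable (tau : seq (action M)) : Prop := exists c, reach c0 tau c.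

Definition Tk (k : nat) (tau : seq (action M)) : Prop :=
  (if k is 0 then synchronous tau else kfifo k tau) /\ executable tau.

Definition Tomega (tau : seq (action M)) : Prop := exists k, 0 < k /\ Tk k tau.

Definition equivS (tau1 tau2 : seq (action M)) : Prop :=
  [/\ Tomega tau1, Tomega tau2 & exists c, reach c0 tau1 c /\ reach c0 tau2 c].

(* ST_k(S) = {pi_!(tau)} U {(pi_!(tau), c) | c stable}; the two kinds of elements
   are represented by two predicates. *)
Definition ST_seq (k : nat) (w : seq (msg M)) : Prop :=
  exists tau, Tk k tau /\ proj_send tau = w.
Definition ST_conf (k : nat) (w : seq (msg M)) (c : config) : Prop :=
  exists tau, [/\ Tk k tau, proj_send tau = w, reach c0 tau c & stable c].

Definition one_synchronizable : Prop :=
  (forall w, ST_seq 0 w <-> ST_seq 1 w) /\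
  (forall w c, ST_conf 0 w c <-> ST_conf 1 w c).

End Semantics.

(* Main.v *)
Require Import Defs.
From mathcomp Require Import all_boot.
From Stdlib Require Import ClassicalEpsilon FunctionalExtensionality.

Set Implicit Arguments. Unset Strict Implicit. Unset Printing Implicit Defensive.

Lemma cat_injl (T : Type) (s t u : seq T) : s ++ t = s ++ u -> t = u.
Proof. by elim: s => //= x s IH [] /IH. Qed.

Section Proofs.
Variables (M : msgset) (S : system M).
Local Notation N := (npeers M).
Local Notation peer := 'I_N.
Local Notation act := (action M).

Definition actor (x : act) : peer := match x with Snd a => src a | Rcv a => dst a end.
Definition amsg (x : act) : msg M := match x with Snd a => a | Rcv a => a end.
Definition proj (i : peer) (t : seq act) := [seq x <- t | actor x == i].

Fixpoint lpath (i : peer) (x : state S i) (u : seq act) (y : state S i) : Prop :=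
  match u with
  | [::] => y = x
  | e :: u' => exists z, trans x e z /\ lpath z u' y
  end.

Lemma lpath_cat i x u v y :
  lpath x (u ++ v) y <-> exists z, lpath (i:=i) x u z /\ lpath z v y.
Proof.
elim: u x => [|e u IH] x /=.
  by split=> [H|[z [-> H]]] //; exists x.
split.
  by move=> [z [Hz /IH [z' [H1 H2]]]]; exists z'; split=> //; exists z.
by move=> [z' [[z [Hz H1]] H2]]; exists z; split=> //; apply/IH; exists z'.
Qed.

Lemma lpath_rcons i x u e y :
  lpath x (rcons u e) y <-> exists z, lpath (i:=i) x u z /\ trans z e y.
Proof.
rewrite -cats1 lpath_cat; split=> [[z [H1 [y' [H2 ->]]]]|[z [H1 H2]]].
  by exists z.
by exists z; split=> //; exists y.
Qed.

Lemma lpath_prefix i x u v y : lpath (i:=i) x (u ++ v) y -> exists z, lpath x u z.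
Proof. by move=> /lpath_cat [z [H _]]; exists z. Qed.

Definition syncT (s : seq (msg M)) : seq act := flatten [seq [:: Snd a; Rcv a] | a <- s].
Definition sendsT (w : seq (msg M)) : seq act := [seq Snd a | a <- w].

Lemma syncT_cat s t : syncT (s ++ t) = syncT s ++ syncT t.
Proof. by rewrite /syncT map_cat flatten_cat. Qed.
Lemma syncT_cons a s : syncT (a :: s) = Snd a :: Rcv a :: syncT s.
Proof. by []. Qed.

Lemma dchoice (P : forall i : peer, state S i -> Prop) :
  (forall i, exists y, P i y) -> exists f : forall i, state S i, forall i, P i (f i).
Proof.
move=> H.
exists (fun i => proj1_sig (constructive_indefinite_description _ (H i))).
by move=> i; case: (constructive_indefinite_description _ (H i)).
Qed.

Lemma sent_on_cat i j (t u : seq act) : sent_on i j (t ++ u) = sent_on i j t ++ sent_on i j u.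
Proof. by rewrite /sent_on pmap_cat filter_cat. Qed.
Lemma recv_on_cat i j (t u : seq act) : recv_on i j (t ++ u) = recv_on i j t ++ recv_on i j u.
Proof. by rewrite /recv_on pmap_cat filter_cat. Qed.
Lemma sent_on_cons i j x (t : seq act) : sent_on i j (x :: t) =
  (if x is Snd a then (if on_chan i j a then [:: a] else [::]) else [::]) ++ sent_on i j t.
Proof. by case: x => a //=; rewrite /sent_on /=; case: ifP. Qed.
Lemma recv_on_cons i j x (t : seq act) : recv_on i j (x :: t) =
  (if x is Rcv a then (if on_chan i j a then [:: a] else [::]) else [::]) ++ recv_on i j t.
Proof. by case: x => a //=; rewrite /recv_on /=; case: ifP. Qed.
Lemma sent_on_syncT i j s : sent_on i j (syncT s) = filter (on_chan i j) s.
Proof. by elim: s => //= a s IH; rewrite syncT_cons !sent_on_cons IH /=; case: ifP. Qed.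
Lemma recv_on_syncT i j s : recv_on i j (syncT s) = filter (on_chan i j) s.
Proof. by elim: s => //= a s IH; rewrite syncT_cons !recv_on_cons IH /=; case: ifP. Qed.
Lemma sent_on_sendsT i j w : sent_on i j (sendsT w) = filter (on_chan i j) w.
Proof. by elim: w => //= a s IH; rewrite sent_on_cons IH /=; case: ifP. Qed.
Lemma recv_on_sendsT i j w : recv_on i j (sendsT w) = [::].
Proof. by elim: w => //= a s IH; rewrite recv_on_cons IH. Qed.

Lemma buf_syncT_cat i j s t w : buf i j (syncT s ++ t) w <-> buf i j t w.
Proof.
rewrite /buf sent_on_cat recv_on_cat sent_on_syncT recv_on_syncT -catA.
by split=> [/cat_injl|->].
Qed.

Lemma buf_sendsT i j w x : buf i j (sendsT w) x <-> x = filter (on_chan i j) w.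
Proof. by rewrite /buf sent_on_sendsT recv_on_sendsT /=; split=> ->. Qed.

Lemma buf_uniq (i j : peer) (t : seq act) w w' : buf i j t w -> buf i j t w' -> w = w'.
Proof. by rewrite /buf => -> /cat_injl. Qed.

Lemma reach_rcons (c c' : config S) t x :
  reach c (rcons t x) c' <-> exists c1, reach c t c1 /\ step c1 x c'.
Proof.
elim: t c => [|y t IH] c /=.
  split=> [[c1 [H ->]]|[c1 [-> H]]]; first by exists c.
  by exists c'.
split=> [[c1 [H1 /IH [c2 [H2 H3]]]]|[c2 [[c1 [H1 H2]] H3]]].
  by exists c2; split=> //; exists c1.
by exists c1; split=> //; apply/IH; exists c2.
Qed.

Lemma reach_cat (c c' : config S) t u :
  reach c (t ++ u) c' <-> exists c1, reach c t c1 /\ reach c1 u c'.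
Proof.
elim: t c => [|y t IH] c /=.
  by split=> [H|[c1 [-> H]]] //; exists c.
split=> [[c1 [H1 /IH [c2 [H2 H3]]]]|[c2 [[c1 [H1 H2]] H3]]].
  by exists c2; split=> //; exists c1.
by exists c1; split=> //; apply/IH; exists c2.
Qed.

Lemma fifo_rcons (t : seq act) x :
  fifo (rcons t x) <-> fifo t /\ forall i j, exists w, buf i j (rcons t x) w.
Proof.
split.
  move=> H; split; last by move=> i j; have := H (size t).+1 i j; rewrite take_oversize // size_rcons.
  move=> n i j; case: (ltnP n (size t)) => Hn.
    by have := H n i j; rewrite -cats1 takel_cat ?(ltnW Hn).
  by rewrite take_oversize //; have := H (size t) i j; rewrite -cats1 take_size_cat.
move=> [H1 H2] n i j; case: (leqP n (size t)) => Hn.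
  by rewrite -cats1 takel_cat //; apply: H1.
by rewrite take_oversize ?size_rcons //; apply: H2.
Qed.

Lemma proj_rcons i t x :
  proj i (rcons t x) = if actor x == i then rcons (proj i t) x else proj i t.
Proof. by rewrite /proj filter_rcons. Qed.

Lemma sent_on_rcons (i j : peer) (t : seq act) x :
  sent_on i j (rcons t x) = sent_on i j t ++
    (if x is Snd a then (if on_chan i j a then [:: a] else [::]) else [::]).
Proof. by rewrite -cats1 sent_on_cat; case: x => a //=; rewrite /sent_on /=; case: ifP. Qed.
Lemma recv_on_rcons (i j : peer) (t : seq act) x :
  recv_on i j (rcons t x) = recv_on i j t ++
    (if x is Rcv a then (if on_chan i j a then [:: a] else [::]) else [::]).
Proof. by rewrite -cats1 recv_on_cat; case: x => a //=; rewrite /recv_on /=; case: ifP. Qed.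

Lemma on_chanE (i j : peer) a : on_chan i j a = ((src a, dst a) == (i, j)).
Proof. by rewrite /on_chan xpair_eqE. Qed.

Lemma buf_drop (i j : peer) (t : seq act) w :
  buf i j t w -> buf i j t (drop (size (recv_on i j t)) (sent_on i j t)).
Proof. by rewrite /buf => ->; rewrite drop_size_cat. Qed.

Lemma decomp (t : seq act) (c : config S) :
  reach (c0 S) t c <->
  [/\ fifo t, forall i, lpath (init S i) (proj i t) (cst c i) &
      forall i j, buf i j t (chan c i j)].
Proof.
elim/last_ind: t c => [|t x IH] c.
  split.
    move=> /= ->; split=> //=.
    by move=> n i j; exists [::].
  case=> _ Hp Hb /=.
  case: c Hp Hb => f ch /= Hp Hb; rewrite /c0.
  have -> : f = init S.
    by apply: functional_extensionality_dep => i; apply: Hp.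
  suff -> : ch = (fun _ _ => [::]) by [].
  apply: functional_extensionality => i; apply: functional_extensionality => j.
  by have := Hb i j; rewrite /buf /=.
split.
  move=> /reach_rcons [c1 [/IH [Hf Hp Hb] Hs]].
  have Hb' : forall i j, buf i j (rcons t x) (chan c i j).
    move=> i j; rewrite /buf sent_on_rcons recv_on_rcons.
    case: x Hs => a /= [_ _ Hc Ho]; rewrite on_chanE.
    - case: eqP => [[<- <-]|Hne].
        by rewrite Hc cats0; have := Hb (src a) (dst a); rewrite /buf => ->; rewrite -cats1 catA.
      rewrite Ho ?cats0; first exact: Hb.
      by apply/negP => /eqP E; apply: Hne; rewrite E.
    - case: eqP => [[<- <-]|Hne].
        by rewrite cats0; have := Hb (src a) (dst a); rewrite /buf Hc => ->; rewrite -catA.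
      rewrite Ho ?cats0; first exact: Hb.
      by apply/negP => /eqP E; apply: Hne; rewrite E.
  split=> //; first by apply/fifo_rcons; split=> // i j; exists (chan c i j).
  move=> i; clear Hb'; rewrite proj_rcons.
  case: x Hs => a /= [Ht Hk _ _]; case: eqP => [<-|Hne].
  - by apply/lpath_rcons; exists (cst c1 (src a)).
  - by rewrite Hk; [apply: Hp | apply/eqP => E; apply: Hne].
  - by apply/lpath_rcons; exists (cst c1 (dst a)).
  - by rewrite Hk; [apply: Hp | apply/eqP => E; apply: Hne].
case=> /fifo_rcons [Hf _] Hp Hb.
pose P := fun (i : peer) (z : state S i) =>
  lpath (init S i) (proj i t) z /\
  (if actor x == i then (trans z x (cst c i) : Prop) else z = cst c i).
have [f Hfp] : exists f : forall i, state S i, forall i, P i (f i).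
  apply: dchoice => i; rewrite /P; have := Hp i; rewrite proj_rcons.
  case: eqP => _; last by exists (cst c i).
  by move=> /lpath_rcons [z [H1 H2]]; exists z.
pose ch := fun i j => drop (size (recv_on i j t)) (sent_on i j t).
have Hch : forall i j, buf i j t (ch i j).
  move=> i j; have [w Hw] := Hf (size t) i j; rewrite take_size in Hw.
  exact: buf_drop Hw.
apply/reach_rcons; exists (Config f ch); split.
  apply/IH; split=> //= i; by case: (Hfp i).
have Hpx := Hfp (actor x); rewrite /P eqxx in Hpx.
have Hk : forall k, k != actor x -> cst c k = f k.
  move=> k Hk; case: (Hfp k) => _; by rewrite eq_sym (negbTE Hk) => ->.
clear Hfp Hp; case: Hpx => _ Hpx; clear P.
case: x Hb Hpx Hk => a Hb Hpx Hk /=; split=> //; first last.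
- move=> p q Hpq; apply: (@buf_uniq p q t); last exact: Hch.
  have := Hb p q; rewrite /buf sent_on_rcons recv_on_rcons on_chanE.
  by rewrite eq_sym (negbTE Hpq) !cats0.
- have := Hb (src a) (dst a); rewrite /buf sent_on_rcons recv_on_rcons /on_chan !eqxx /= cats0.
  have := Hch (src a) (dst a); rewrite /buf => ->.
  by rewrite -catA => /cat_injl.
- move=> p q Hpq; apply: (@buf_uniq p q t); last exact: Hch.
  have := Hb p q; rewrite /buf sent_on_rcons recv_on_rcons on_chanE.
  by rewrite eq_sym (negbTE Hpq) !cats0.
- have := Hb (src a) (dst a); rewrite /buf sent_on_rcons recv_on_rcons /on_chan !eqxx /= cats0.
  have := Hch (src a) (dst a); rewrite /buf => ->.
  by rewrite -catA => /cat_injl <-; rewrite cats1.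
Qed.

Lemma exec_with (t : seq act) (i0 : peer) (y0 : state S i0) :
  fifo t -> (forall i, exists y, lpath (init S i) (proj i t) y) ->
  lpath (init S i0) (proj i0 t) y0 ->
  exists c, reach (c0 S) t c /\ cst c i0 = y0.
Proof.
move=> Hf Hp H0.
pose P := fun (i : peer) (z : state S i) =>
  lpath (init S i) (proj i t) z /\ (forall e : i0 = i, z = eq_rect i0 (state S) y0 i e).
have [f Hfp] : exists f : forall i, state S i, forall i, P i (f i).
  apply: dchoice => i; rewrite /P; case: (eqVneq i0 i) => [<-|ne].
    by exists y0; split=> // e; rewrite (eq_irrelevance e erefl).
  have [z Hz] := Hp i; exists z; split=> // e; by rewrite e eqxx in ne.
pose ch := fun i j => drop (size (recv_on i j t)) (sent_on i j t).
exists (Config f ch); split; last first.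
  by case: (Hfp i0) => _ /(_ erefl).
apply/decomp; split=> //=; first by move=> i; case: (Hfp i).
move=> i j; have [w Hw] := Hf (size t) i j; rewrite take_size in Hw.
exact: buf_drop Hw.
Qed.

Lemma exec_of (t : seq act) :
  fifo t -> (forall i, exists y, lpath (init S i) (proj i t) y) ->
  exists c, reach (c0 S) t c.
Proof.
move=> Hf Hp; have Hn : 0 < N by apply: npeers_pos.
pose i0 : peer := Ordinal Hn.
have [y0 Hy0] := Hp i0.
by have [c [Hc _]] := exec_with Hf Hp Hy0; exists c.
Qed.

Lemma kfifo_fifo k (t : seq act) : kfifo k t -> fifo t.
Proof. by move=> H n i j; have [w [Hw _]] := H n i j; exists w. Qed.

Lemma kfifo_nil k : kfifo k ([::] : seq act).
Proof. by move=> n i j; exists [::]. Qed.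

Lemma kfifo_cons2 k m (t : seq act) : 0 < k -> kfifo k t -> kfifo k (Snd m :: Rcv m :: t).
Proof.
move=> Hk H [|[|n]] i j /=.
- by exists [::].
- exists (filter (on_chan i j) [:: m]); split; first by rewrite /buf /sent_on /recv_on.
  by rewrite /=; case: ifP.
- have [w [Hw Hs]] := H n i j; exists w; split=> //.
  exact: ((buf_syncT_cat i j [:: m] (take n t) w).2 Hw).
Qed.

Lemma kfifo_syncT_cat k s (t : seq act) : 0 < k -> kfifo k t -> kfifo k (syncT s ++ t).
Proof. by move=> Hk H; elim: s => //= m s IH; apply: kfifo_cons2. Qed.

Lemma nochan_nil (i j : peer) (t : seq act) :
  all (fun x => ~~ on_chan i j (amsg x)) t -> sent_on i j t = [::] /\ recv_on i j t = [::].
Proof.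
elim: t => //= x t IH /andP [Hx /IH [H1 H2]].
rewrite sent_on_cons recv_on_cons H1 H2.
by case: x Hx => a /= /negbTE ->.
Qed.

Lemma kfifo_snd a (t : seq act) :
  all (fun x => ~~ on_chan (src a) (dst a) (amsg x)) t -> kfifo 1 t -> kfifo 1 (Snd a :: t).
Proof.
move=> Hall H [|n] i j /=; first by exists [::].
have [w [Hw Hs]] := H n i j.
case E : (on_chan i j a).
  have [Ei Ej] : src a = i /\ dst a = j by move/andP: E => [/eqP -> /eqP ->].
  have [H1 H2] : sent_on i j (take n t) = [::] /\ recv_on i j (take n t) = [::].
    apply: nochan_nil; rewrite -Ei -Ej.
    by move: Hall; rewrite -{1}(cat_take_drop n t) all_cat => /andP [].
  exists [:: a]; split=> //.
  by rewrite /buf sent_on_cons recv_on_cons E H1 H2.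
exists w; split=> //.
by rewrite /buf sent_on_cons recv_on_cons E.
Qed.

Lemma kfifo_rcons k (t : seq act) x :
  kfifo k t -> (forall i j, exists w, buf i j (rcons t x) w /\ size w <= k) ->
  kfifo k (rcons t x).
Proof.
move=> H1 H2 n i j; case: (leqP n (size t)) => Hn.
  by rewrite -cats1 takel_cat //; apply: H1.
by rewrite take_oversize ?size_rcons //; apply: H2.
Qed.

Lemma size_sent_on (i j : peer) (t : seq act) : size (sent_on i j t) <= size t.
Proof.
elim: t => //= x t IH; rewrite sent_on_cons.
case: x => a /=; last exact: leqW.
by case: ifP => _ /=; [rewrite ltnS | exact: leqW].
Qed.

Lemma fifo_kfifo (t : seq act) : fifo t -> kfifo (size t).+1 t.
Proof.
move=> H n i j; have [w Hw] := H n i j; exists w; split=> //.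
have : size (sent_on i j (take n t)) <= size t.
  apply: leq_trans (size_sent_on _ _ _) _; rewrite size_take; case: ifP => // /ltnW //.
rewrite Hw size_cat => Hs; apply: leq_trans (leq_addl _ _) _.
by apply: leq_trans Hs _.
Qed.

Lemma Tomega_of (t : seq act) c : reach (c0 S) t c -> Tomega S t.
Proof.
move=> H; exists (size t).+1; split=> //; split; last by exists c.
by apply: fifo_kfifo; case/decomp: H.
Qed.

Lemma proj_send_syncT s : proj_send (syncT s) = s.
Proof. by elim: s => //= a s IH; rewrite IH. Qed.

Lemma proj_send_sendsT w : proj_send (sendsT w) = w.
Proof. by elim: w => //= a s IH; rewrite IH. Qed.

Lemma proj_send_cat (t u : seq act) : proj_send (t ++ u) = proj_send t ++ proj_send u.
Proof. by rewrite /proj_send pmap_cat. Qed.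

Lemma all_syncT (Q : pred (msg M)) s : all (fun x => Q (amsg x)) (syncT s) = all Q s.
Proof. by elim: s => //= a s ->; rewrite andbA andbb. Qed.

Lemma proj_syncT_src (q : peer) t : all (fun m => src m == q) t -> proj q (syncT t) = sendsT t.
Proof.
elim: t => //= m t IH /andP [/eqP Hm Ht].
rewrite Hm eqxx.
have -> : (dst m == q) = false by rewrite -Hm eq_sym (negbTE (src_neq_dst m)).
by rewrite -/(syncT t) IH.
Qed.

Lemma proj_cat i (t u : seq act) : proj i (t ++ u) = proj i t ++ proj i u.
Proof. by rewrite /proj filter_cat. Qed.

Lemma proj_sendsT i w : proj i (sendsT w) = sendsT [seq m <- w | src m == i].
Proof. by elim: w => //= m w IH; rewrite /proj /= -/(proj i _) IH; case: ifP. Qed.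

Lemma fifo_norm s w : fifo (syncT s ++ sendsT w).
Proof.
apply: (@kfifo_fifo (size w).+1); apply: kfifo_syncT_cat => //.
move=> n i j; exists (filter (on_chan i j) (take n w)); split.
  by rewrite /sendsT -map_take; apply/buf_sendsT.
rewrite size_filter; apply: leq_trans (count_size _ _) _.
by rewrite size_take_min; apply: leq_trans (geq_minr _ _) _.
Qed.

Lemma proj_Snd i a : proj i [:: Snd a] = if src a == i then [:: Snd a] else [::].
Proof. by rewrite /proj /=; case: ifP. Qed.
Lemma proj_Rcv i a : proj i [:: Rcv a] = if dst a == i then [:: Rcv a] else [::].
Proof. by rewrite /proj /=; case: ifP. Qed.
Lemma syncT_cons2 a t : syncT (a :: t) = [:: Snd a] ++ [:: Rcv a] ++ syncT t.
Proof. by []. Qed.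

Lemma all_take_ (T : Type) (P : pred T) n (t : seq T) : all P t -> all P (take n t).
Proof. by rewrite -{1}(cat_take_drop n t) all_cat => /andP []. Qed.

Lemma swap (H1 : one_synchronizable S) s (a : msg M) (wq : seq (msg M))
    (y : state S (dst a)) :
  all (fun m => src m == dst a) wq ->
  (forall i, i != dst a -> exists z, lpath (init S i)
     (proj i (syncT s) ++ (if src a == i then [:: Snd a] else [::])) z) ->
  lpath (init S (dst a)) (proj (dst a) (syncT s) ++ sendsT wq ++ [:: Rcv a]) y ->
  lpath (init S (dst a)) (proj (dst a) (syncT s) ++ Rcv a :: sendsT wq) y.
Proof.
move=> Hwq Hoth Hq.
have Hpq : (src a == dst a) = false by apply/negbTE/src_neq_dst.
have Hnoa : forall t, all (fun m => src m == dst a) t ->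
    all (fun m => ~~ on_chan (src a) (dst a) m) t.
  move=> t Ht; apply/allP => m Hm; have /eqP Hm' := allP Ht m Hm.
  by rewrite /on_chan Hm' eq_sym Hpq.
have Pa : forall i t, i != dst a -> proj i (syncT (s ++ a :: t)) =
    proj i (syncT s) ++ (if src a == i then [:: Snd a] else [::]) ++ proj i (syncT t).
  move=> i t Hi; rewrite syncT_cat syncT_cons2 !proj_cat proj_Snd proj_Rcv.
  by rewrite (eq_sym (dst a)) (negbTE Hi).
have SA : forall k, k <= size wq -> forall i, i != dst a ->
    exists z, lpath (init S i) (proj i (syncT (s ++ a :: take k wq))) z.
  elim=> [|k IH] Hk i Hi.
    by rewrite take0 Pa //= cats0; apply: Hoth.
  have Hk' : k < size wq := Hk.
  pose b := nth a wq k; pose t := take k wq.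
  have Htk : take k.+1 wq = t ++ [:: b] by rewrite (take_nth a Hk') cats1.
  have Hb : src b = dst a by apply/eqP; apply: (allP Hwq); apply: mem_nth.
  have Ht : all (fun m => src m == dst a) t by apply: all_take_.
  pose X := syncT s ++ ([:: Snd a] ++ (syncT t ++ [:: Snd b])).
  have HX1 : kfifo 1 X.
    apply: kfifo_syncT_cat => //; apply: kfifo_snd.
      rewrite all_cat (all_syncT (fun m => ~~ on_chan (src a) (dst a) m)) /= andbT.
      rewrite (Hnoa t Ht) /=.
      by rewrite /on_chan Hb eq_sym Hpq.
    apply: kfifo_syncT_cat => //; apply: kfifo_snd => //; exact: kfifo_nil.
  have [cX HcX] : exists c, reach (c0 S) X c.
    apply: exec_of; first exact: kfifo_fifo HX1.
    move=> i'; case: (eqVneq i' (dst a)) => [->|Hi'].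
      rewrite /X !proj_cat proj_Snd Hpq (proj_syncT_src Ht) proj_Snd Hb eqxx /=.
      move: Hq; rewrite -(cat_take_drop k.+1 wq) /sendsT map_cat Htk map_cat -!catA.
      move=> Hq'; apply: (lpath_prefix (v := [seq Snd a0 | a0 <- drop k.+1 wq] ++ [:: Rcv a])).
      by rewrite -!catA; exact: Hq'.
    have := IH (ltnW Hk) i' Hi'; rewrite Pa // /X !proj_cat proj_Snd (proj_Snd i' b) Hb.
    by rewrite (eq_sym (dst a)) (negbTE Hi') cats0.
  have : ST_seq S 0 (proj_send X).
    by apply/(H1.1 _); exists X; split=> //; split=> //; exists cX.
  case=> t0 [[[s0 Hs0] [c' Hc']] Hps].
  case/decomp: Hc' => _ Hp _; exists (cst c' i); move: Hps (Hp i).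
  rewrite Hs0 -/(syncT s0) proj_send_syncT => ->.
  by rewrite /X !proj_send_cat proj_send_syncT /= proj_send_syncT Htk.
pose Y := syncT s ++ ([:: Snd a] ++ (syncT wq ++ [:: Rcv a])).
have HY0 : forall i j, buf i j Y [::].
  move=> i j; apply/buf_syncT_cat.
  rewrite /buf !sent_on_cat !recv_on_cat sent_on_syncT recv_on_syncT.
  rewrite !sent_on_cons !recv_on_cons /sent_on /recv_on /= !cats0.
  case E : (on_chan i j a) => /=; last by rewrite cats0.
  have [Ei Ej] : src a = i /\ dst a = j by move/andP: E => [/eqP -> /eqP ->].
  suff -> : [seq x <- wq | on_chan i j x] = [::] by [].
  apply/eqP; rewrite -(negbK (_ == _)) -has_filter; apply/negP => /hasP [m Hm].
  by move/allP: (Hnoa wq Hwq) => /(_ m Hm); rewrite Ei Ej => /negbTE ->.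
have HY1 : kfifo 1 Y.
  have -> : Y = rcons (syncT s ++ ([:: Snd a] ++ (syncT wq ++ [::]))) (Rcv a).
    by rewrite /Y cats0 -cats1 -!catA.
  apply: kfifo_rcons.
    apply: kfifo_syncT_cat => //; apply: kfifo_snd.
      by rewrite cats0 (all_syncT (fun m => ~~ on_chan (src a) (dst a) m)); apply: Hnoa.
    apply: kfifo_syncT_cat => //; exact: kfifo_nil.
  move=> i j; exists [::]; split=> //.
  by have := HY0 i j; rewrite /Y cats0 -cats1 -!catA.
have HprojY : forall i, i != dst a -> proj i Y = proj i (syncT (s ++ a :: wq)).
  move=> i Hi; rewrite Pa // /Y !proj_cat proj_Rcv (eq_sym (dst a)) (negbTE Hi) cats0.
  by [].
have HqY : proj (dst a) Y = proj (dst a) (syncT s) ++ sendsT wq ++ [:: Rcv a].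
  by rewrite /Y !proj_cat proj_Snd Hpq (proj_syncT_src Hwq) proj_Rcv eqxx.
have [cY [HcY HyY]] : exists c, reach (c0 S) Y c /\ cst c (dst a) = y.
  apply: exec_with; first exact: kfifo_fifo HY1; last by rewrite HqY.
  move=> i; case: (eqVneq i (dst a)) => [->|Hi]; first by exists y; rewrite HqY.
  by rewrite HprojY //; have := SA (size wq) (leqnn _) i Hi; rewrite take_size.
have HstY : stable cY.
  move=> i j; case/decomp: HcY => _ _ Hb; exact: buf_uniq (Hb i j) (HY0 i j).
have : ST_conf 0 (proj_send Y) cY.
  by apply/(H1.2 _ _); exists Y; split=> //; split=> //; exists cY.
case=> t0 [[[s0 Hs0] _] Hps Hr _].
case/decomp: Hr => _ Hp _; move: Hps (Hp (dst a)); rewrite HyY.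
rewrite Hs0 -/(syncT s0) proj_send_syncT => ->.
rewrite /Y !proj_send_cat proj_send_syncT /= proj_send_syncT.
rewrite cats0 syncT_cat syncT_cons2 !proj_cat proj_Snd proj_Rcv Hpq eqxx (proj_syncT_src Hwq).
by [].
Qed.

Lemma split_first (T : eqType) (P : pred T) (w : seq T) a r :
  filter P w = a :: r ->
  exists w1 w2, [/\ w = w1 ++ a :: w2, filter P w1 = [::] & filter P w2 = r].
Proof.
elim: w => //= x w IH; case: ifP => Px.
  by case=> <- <-; exists [::], w.
move/IH => [w1 [w2 [-> H1 H2]]]; exists (x :: w1), w2; split=> //=.
by rewrite Px.
Qed.

Lemma filter_nil_all (T : eqType) (P : pred T) (w : seq T) :
  (forall m, m \in w -> ~~ P m) -> filter P w = [::].
Proof.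
elim: w => //= x w IH H; rewrite (negbTE (H x (mem_head _ _))) IH //.
by move=> m Hm; apply: H; rewrite in_cons Hm orbT.
Qed.

Lemma normalize (Hout : forall m m' : msg M, src m = src m' -> dst m = dst m')
    (H1 : one_synchronizable S) (t : seq act) (c : config S) :
  reach (c0 S) t c -> exists s w, reach (c0 S) (syncT s ++ sendsT w) c.
Proof.
elim/last_ind: t c => [|t x IH] c.
  by move=> H; exists [::], [::].
move=> /reach_rcons [c1 [/IH [s [w Hr]] Hs]].
case: x Hs => a Hs.
  exists s, (rcons w a).
  rewrite /sendsT map_rcons -rcons_cat; apply/reach_rcons; by exists c1.
have [Hf Hp Hb] := (decomp _ _).1 Hr.
case: Hs => /= Htr Hk Hc Ho.
have Hpq : (src a == dst a) = false by apply/negbTE/src_neq_dst.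
have Hw : filter (on_chan (src a) (dst a)) w = a :: chan c (src a) (dst a).
  by rewrite -Hc; move: (Hb (src a) (dst a)) => /buf_syncT_cat /buf_sendsT <-.
have [w1 [w2 [Ew Hw1 Hw2]]] := split_first Hw.
have Hw1s : forall i, src a == i -> filter (fun m => src m == i) w1 = [::].
  move=> i /eqP <-; apply: filter_nil_all => m Hm; apply/negP => /eqP Hsm.
  have : m \in filter (on_chan (src a) (dst a)) w1.
    by rewrite mem_filter Hm /on_chan Hsm (Hout _ _ Hsm) !eqxx.
  by rewrite Hw1.
exists (rcons s a), (w1 ++ w2).
apply/decomp; split.
- exact: fifo_norm.
- move=> i; case: (eqVneq i (dst a)) => [->|Hi].
    pose wq := filter (fun m => src m == dst a) w.
    have Hwq : filter (fun m => src m == dst a) (w1 ++ w2) = wq.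
      by rewrite /wq Ew !filter_cat /= Hpq.
    rewrite -cats1 syncT_cat syncT_cons2 !proj_cat proj_Snd proj_Rcv Hpq eqxx.
    rewrite proj_sendsT Hwq /= -catA /=.
    apply: swap => //.
    + by apply/allP => m; rewrite mem_filter => /andP [].
    + move=> i' Hi'; have := Hp i'; rewrite proj_cat proj_sendsT Ew filter_cat /=.
      case: ifP => E.
        rewrite (Hw1s _ E) /= => Hl.
        apply: (lpath_prefix (v := sendsT [seq m <- w2 | src m == i'])).
        by rewrite -catA; exact: Hl.
      move=> Hl; apply: (lpath_prefix (v := sendsT ([seq m <- w1 | src m == i'] ++
          [seq m <- w2 | src m == i']))); rewrite cats0; exact: Hl.
    + have := Hp (dst a); rewrite proj_cat proj_sendsT => Hl.
      have := (lpath_rcons _ _ _ _).2 (ex_intro _ _ (conj Hl Htr)).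
      by rewrite -cats1 -!catA.
  rewrite Hk // -cats1 syncT_cat syncT_cons2 !proj_cat proj_Snd proj_Rcv.
  rewrite (eq_sym (dst a)) (negbTE Hi).
  have := Hp i; rewrite proj_cat !proj_sendsT Ew !filter_cat /=.
  case: ifP => E; first by rewrite (Hw1s _ E) -!catA.
  by rewrite /= cats0.
- move=> i j; apply/buf_syncT_cat; apply/buf_sendsT.
  case: (eqVneq (src a, dst a) (i, j)) => [[<- <-]|Hne].
    by rewrite filter_cat Hw1 Hw2.
  rewrite Ho; last by rewrite eq_sym.
  move: (Hb i j) => /buf_syncT_cat /buf_sendsT ->.
  by rewrite Ew !filter_cat /= on_chanE (negbTE Hne).
Qed.

End Proofs.

Theorem lemma4p11 (M : msgset) (S : system M) :
  oriented_ring M ->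
  one_synchronizable S ->
  forall tau : seq (action M), Tomega S tau ->
  exists tauN : seq (action M),
    normalized tauN /\ Tomega S tauN /\ equivS S tau tauN.
Proof.
move=> Hring H1 t Ht.
have [c Hc] : executable S t.
  by case: Ht => [[|k] [Hk [_ He]]].
have Hout : forall m m' : msg M, src m = src m' -> dst m = dst m'.
  move=> m m' E; apply: val_inj.
  have := (Hring (src m) (dst m)).1 (ex_intro _ m (conj erefl erefl)).
  have := (Hring (src m') (dst m')).1 (ex_intro _ m' (conj erefl erefl)).
  by rewrite E => -> ->.
have [s [w Hr]] := normalize Hout H1 Hc.
exists (syncT s ++ sendsT w); split.
  by exists (syncT s), w; split=> //; exists s.
split; first exact: Tomega_of Hr.
split; [exact: Tomega_of Hc | exact: Tomega_of Hr | by exists c].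
Qed.
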